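(* Let $N,B,W,T$ be positive integers with $N\le B$, $B+1\le W$ and $T\ge B$, and set $T_{\mathrm{eff}}=\min(T,W-1)$. Then there exists a streaming code of some rate $R$ with delay $T$ over the channel $\mathcal{C}(N,B,W)$ such that \[ \left(\frac{R}{1-R}\right)B+N> T_{\mathrm{eff}} . \]
   Context: Channel $\mathcal{C}(N,B,W)$: a packet erasure channel on a sequence of channel uses $i=0,1,2,\dots$ such that in every sliding window of $W$ consecutive channel uses, the set of erased positions is either a single burst of consecutive erasures of length at most $B$, or consists of at most $N$ erasures in arbitrary positions. Streaming code (equal source–channel rates): at each time $i\ge 0$ the encoder observes a source symbol $\mathbf{s}[i]\in\mathbb{F}_q^k$ and transmits $\mathbf{x}[i]=f_i(\mathbf{s}[0],\dots,\mathbf{s}[i])\in\mathbb{F}_q^n$ over some finite field $\mathbb{F}_q$; the channel output is $\mathbf{y}[i]=\mathbf{x}[i]$ or $\mathbf{y}[i]=\star$ (erasure). The code has delay $T$ over the channel if there are decoding functions with $\mathbf{s}[i]=g_i(\mathbf{y}[0],\dots,\mathbf{y}[i+T])$ for every $i\ge0$, every source sequence and every erasure pattern allowed by the channel. Its rate is $R=k/n$. *)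

(* Defs.v *)
From HB Require Import structures.
From mathcomp Require Import all_boot all_order all_algebra all_field.
Set Implicit Arguments. Unset Strict Implicit. Unset Printing Implicit Defensive.
Import Order.TTheory GRing.Theory Num.Theory.

(* An erasure pattern: e j = true iff channel use j is erased. *)
Definition erasure_pattern := nat -> bool.

Definition admissible (N B W : nat) (e : erasure_pattern) : Prop :=
  forall t : nat,
    (exists a l : nat, l <= B /\
       forall j, t <= j < t + W -> e j = (a <= j < a + l))
    \/ (\sum_(t <= j < t + W) (e j : nat) <= N).

Definition encoder (F : finFieldType) (k n : nat) :=
  forall i : nat, ('I_i.+1 -> 'rV[F]_k) -> 'rV[F]_n.

(* Decoder: g_i maps (y[0],...,y[i+T]) to an estimate of s[i];
   None stands for an erasure (the symbol star). *)
Definition decoder (F : finFieldType) (k n T : nat) :=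
  forall i : nat, ('I_(i + T).+1 -> option 'rV[F]_n) -> 'rV[F]_k.

Definition chan_out (F : finFieldType) (k n : nat) (f : encoder F k n)
  (s : nat -> 'rV[F]_k) (e : erasure_pattern) (j : nat) : option 'rV[F]_n :=
  if e j then None else Some (f j (fun m : 'I_j.+1 => s (nat_of_ord m))).

Definition has_delay_over (F : finFieldType) (k n T N B W : nat)
  (f : encoder F k n) (g : decoder F k n T) : Prop :=
  forall (s : nat -> 'rV[F]_k) (e : erasure_pattern),
    admissible N B W e ->
    forall i : nat,
      g i (fun m : 'I_(i + T).+1 => chan_out f s e (nat_of_ord m)) = s i.

Definition T_eff (T W : nat) : nat := minn T W.-1.

(* Main.v *)
Require Import Defs.
From HB Require Import structures.
From mathcomp Require Import all_boot all_order all_algebra all_field.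
From mathcomp Require Import zify ring lra.
From Stdlib Require Import FunctionalExtensionality.
Import Order.TTheory GRing.Theory Num.Theory.
Set Implicit Arguments. Unset Strict Implicit. Unset Printing Implicit Defensive.

Section MDS.
Local Open Scope ring_scope.
Variable F : finFieldType.

Definition alpha (j : nat) : F := nth 0 (enum F) j.

Lemma alpha_inj i j : (i < #|F|)%N -> (j < #|F|)%N -> alpha i = alpha j -> i = j.
Proof.
move=> hi hj /eqP; rewrite /alpha nth_uniq ?enum_uniq -?cardT //; by move/eqP.
Qed.

Definition lagc (K a : nat) : F := \prod_(0 <= a' < K | a' != a) (alpha a - alpha a').
Definition lag (K a : nat) : {poly F} :=
  (lagc K a)^-1 *: \prod_(0 <= a' < K | a' != a) ('X - (alpha a')%:P).

Definition G (K a j : nat) : F := (lag K a).[alpha j].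

Lemma size_lag K a : (a < K)%N -> (size (lag K a) <= K)%N.
Proof.
move=> haK; rewrite /lag (leq_trans (size_scale_leq _ _)) //.
rewrite -big_filter size_prod_XsubC size_filter.
have hc := count_predC (pred1 a) (iota 0 K).
rewrite (count_uniq_mem _ (iota_uniq 0 K)) mem_iota /= haK size_iota in hc.
rewrite /index_iota subn0.
change (count (predC (pred1 a)) (iota 0 K) < K)%N. by rewrite -{2}hc.
Qed.

Lemma G_sys K a j : (K <= #|F|)%N -> (a < K)%N -> (j < K)%N ->
  G K a j = if a == j then 1 else 0.
Proof.
move=> hK ha hj; rewrite /G /lag hornerZ horner_prod.
under eq_bigr => i _ do rewrite hornerXsubC.
case: eqP => [<-|/eqP naj].
  rewrite mulVf // /lagc prodf_seq_neq0; apply/allP => x.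
  rewrite /index_iota subn0 mem_iota add0n => /andP [_ hx]; apply/implyP => hxa.
  rewrite subr_eq0; apply/eqP => /alpha_inj.
  move/(_ (leq_trans ha hK) (leq_trans hx hK)) => h; by rewrite h eqxx in hxa.
rewrite big_mkcond (bigD1_seq j) /index_iota ?subn0 ?mem_iota ?iota_uniq //=.
by rewrite eq_sym naj subrr mul0r mulr0.
Qed.

Lemma cw_sys K (msg : nat -> F) j : (K <= #|F|)%N -> (j < K)%N ->
  \sum_(a < K) msg a * G K a j = msg j.
Proof.
move=> hK hj; rewrite (bigD1 (Ordinal hj)) //= G_sys // eqxx mulr1.
rewrite big1 ?addr0 // => a /eqP ha; rewrite G_sys //.
case: eqP => [h|]; last by rewrite mulr0.
by exfalso; apply: ha; apply: val_inj.
Qed.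

Lemma count_inj (f : nat -> bool) (g : nat -> nat) L (s2 : seq nat) :
  (forall j1 j2, (j1 < L)%N -> (j2 < L)%N -> f j1 -> f j2 -> g j1 = g j2 -> j1 = j2) ->
  (forall j, (j < L)%N -> f j -> g j \in s2) ->
  (count f (iota 0 L) <= size s2)%N.
Proof.
move=> hinj hin.
have <- : size (map g (filter f (iota 0 L))) = count f (iota 0 L).
  by rewrite size_map size_filter.
apply: uniq_leq_size.
  rewrite map_inj_in_uniq ?filter_uniq ?iota_uniq //.
  move=> x y; rewrite !mem_filter !mem_iota /= => /andP [fx hx] /andP [fy hy].
  by apply: hinj.
move=> y /mapP [x]; rewrite mem_filter mem_iota /= => /andP [fx hx] ->.
by apply: hin.
Qed.

Lemma MDS K L (msg : nat -> F) (bad : nat -> bool) :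
  (K <= L)%N -> (L <= #|F|)%N ->
  (forall j, (j < L)%N -> ~~ bad j -> \sum_(a < K) msg a * G K a j = 0) ->
  (count bad (iota 0 L) <= L - K)%N ->
  forall a, (a < K)%N -> msg a = 0.
Proof.
move=> hKL hLF hz hcnt.
pose P := \sum_(a < K) msg a *: lag K a.
have hP j : \sum_(a < K) msg a * G K a j = P.[alpha j].
  by rewrite /P horner_sum; apply: eq_bigr => a _; rewrite hornerZ.
have P0 : P = 0.
  apply/eqP; apply: contraT => nP.
  pose rs := map alpha (filter (predC bad) (iota 0 L)).
  have := @max_poly_roots _ P rs nP.
  have -> : all (root P) rs.
    apply/allP => x /mapP [j]; rewrite mem_filter mem_iota /= => /andP [nb hj] ->.
    by rewrite /root -hP hz.
  have -> : uniq rs.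
    rewrite map_inj_in_uniq ?filter_uniq ?iota_uniq //.
    move=> x y; rewrite !mem_filter !mem_iota /= => /andP [_ hx] /andP [_ hy].
    apply: alpha_inj; apply: leq_trans hLF; [exact: hx| exact: hy].
  move=> /(_ isT isT).
  have hs : (size P <= K)%N.
    rewrite /P (leq_trans (size_sum _ _ _)) //.
    apply/bigmax_leqP => a _; apply: (leq_trans (size_scale_leq _ _)).
    exact: size_lag.
  rewrite size_map size_filter.
  have := count_predC bad (iota 0 L); rewrite size_iota => hc.
  move=> hlt; have := leq_trans hlt hs.
  move: hcnt hc hKL; clear; lia.
move=> a ha; rewrite -(cw_sys msg (leq_trans hKL hLF) ha) hP P0 horner0 //.
Qed.

End MDS.

Section Code.
Local Open Scope ring_scope.
Variable F : finFieldType.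
Variables tau B N : nat.

Definition cc := (tau.+1 - N)%N.
Definition kk := (cc * tau)%N.
Definition nn := (kk + cc * B + N * B)%N.

Definition cwv (S : int -> nat -> F) (l : nat) (e : int) (j : nat) : F :=
  \sum_(m < tau - B) S (e + (B + m)%:Z) (l * tau + B + m)%N * G F (tau - B) m j.
Definition cwr (S : int -> nat -> F) (beta : nat) (d : int) (j : nat) : F :=
  \sum_(a < cc) S (d + a%:Z) (a * tau + beta)%N * G F cc a j.

Definition X (S : int -> nat -> F) (t : int) (o : nat) : F :=
  if (o < kk)%N then S t o
  else if (o < kk + cc * B)%N then
    cwv S ((o - kk) %/ B) (t - (tau + (o - kk) %% B)%:Z) (tau - B + (o - kk) %% B)
    + S (t - tau%:Z) (((o - kk) %/ B) * tau + (o - kk) %% B)%N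
  else cwr S ((o - kk - cc * B) %% B) (t - (cc + (o - kk - cc * B) %/ B)%:Z)
          (cc + (o - kk - cc * B) %/ B).

Lemma X_sys S t o : (o < kk)%N -> X S t o = S t o.
Proof. by rewrite /X => ->. Qed.

Lemma X_q S t l b : (l < cc)%N -> (b < B)%N ->
  X S t (kk + l * B + b) = cwv S l (t - (tau + b)%:Z) (tau - B + b)
                           + S (t - tau%:Z) (l * tau + b)%N.
Proof.
move=> hl hb; have B0 : (0 < B)%N by lia.
rewrite /X ifF; last by lia.
rewrite ifT; last by nia.
have -> : (kk + l * B + b - kk = l * B + b)%N by lia.
by rewrite divnMDl // modnMDl (divn_small hb) (modn_small hb) addn0.
Qed.

Lemma X_r S t b' beta : (b' < N)%N -> (beta < B)%N ->
  X S t (kk + cc * B + b' * B + beta) = cwr S beta (t - (cc + b')%:Z) (cc + b').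
Proof.
move=> hl hb; have B0 : (0 < B)%N by lia.
rewrite /X ifF; last by lia.
rewrite ifF; last by lia.
have -> : (kk + cc * B + b' * B + beta - kk - cc * B = b' * B + beta)%N by lia.
by rewrite divnMDl // modnMDl (divn_small hb) (modn_small hb) addn0.
Qed.

Lemma X_lin S1 S2 t o : X (fun t o => S1 t o - S2 t o) t o = X S1 t o - X S2 t o.
Proof.
rewrite /X /cwv /cwr; case: ifP => // _; case: ifP => _.
  rewrite opprD addrACA -sumrB; congr (_ + _).
  by apply: eq_bigr => m _; rewrite mulrBl.
by rewrite -sumrB; apply: eq_bigr => m _; rewrite mulrBl.
Qed.

Lemma X_caus S1 S2 (t : int) o :
  (forall t' o', (t' <= t)%R -> S1 t' o' = S2 t' o') -> X S1 t o = X S2 t o.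
Proof.
move=> h; rewrite /X /cwv /cwr; case: ifP => _; first by rewrite h.
case: ifP => _.
  rewrite h; last by lia.
  congr (_ + _); apply: eq_bigr => m _; rewrite h //.
  have := ltn_ord m; move: (nat_of_ord m) => mm; lia.
apply: eq_bigr => m _; rewrite h //.
have := ltn_ord m; move: (nat_of_ord m) ((o - kk - cc * B) %/ B)%N => mm q; lia.
Qed.


Section Decode.
Hypothesis hB : (0 < B)%N.
Hypothesis hN : (0 < N)%N.
Hypothesis hNB : (N <= B)%N.
Hypothesis hBt : (B <= tau)%N.
Hypothesis hF : (tau.+1 <= #|F|)%N.

Variable S : int -> nat -> F.
Variable i : nat.
Variable e : nat -> bool.
Hypothesis H0 : forall (t : int) o, (t < i%:Z)%R -> S t o = 0.
Hypothesis H1 : forall t : nat, (i <= t <= i + tau)%N -> ~~ e t ->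
  forall o, (o < nn)%N -> X S t%:Z o = 0.

Lemma HX0 t o : (t < i%:Z)%R -> X S t o = 0.
Proof.
move=> ht; rewrite (@X_caus S (fun _ _ => 0)); last first.
  by move=> t' o' h; apply: H0; apply: (le_lt_trans h ht).
by rewrite /X /cwv /cwr; case: ifP => _ //; case: ifP => _;
  rewrite ?big1 ?addr0 // => m _; rewrite mul0r.
Qed.

Lemma kk_nn o : (o < kk)%N -> (o < nn)%N.
Proof. rewrite /nn; lia. Qed.

Lemma idx_lt l m : (l < cc)%N -> (m < tau)%N -> (l * tau + m < kk)%N.
Proof. move=> hl hm; rewrite /kk; nia. Qed.

Definition Budget (M : nat) := exists s2 : seq nat, (size s2 <= M)%N /\ (forall t : nat, (i <= t <= i + tau)%N -> e t -> t \in s2).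

Lemma Vstep : Budget B -> forall l m, (l < cc)%N -> (m < tau - B)%N ->
  S i%:Z (l * tau + B + m)%N = 0.
Proof.
move=> [s2 [hs2 hin]] l m hl hm.
pose e0 : int := i%:Z - (B + m)%:Z.
pose msg := fun m' : nat => S (e0 + (B + m')%:Z) (l * tau + B + m')%N.
pose bad := fun j => (m <= j)%N && e (i + j - m)%N.
have hmsg := @MDS F (tau - B) tau msg bad (leq_subr _ _) (ltnW hF).
have := hmsg _ _ m hm; rewrite /msg.
have -> : e0 + (B + m)%:Z = i%:Z by rewrite /e0; lia.
apply.
- move=> j hj nb.
  have -> : \sum_(a < tau - B) msg a * G F (tau - B) a j = cwv S l e0 j by [].
  case: (ltnP j (tau - B)) => hjK.
    rewrite /cwv.
    have -> := (@cw_sys F (tau - B) msg j (leq_trans (leq_subr _ _) (ltnW hF)) hjK).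
    rewrite /msg; case: (ltnP j m) => hjm.
      by apply: H0; rewrite /e0; lia.
    have -> : e0 + (B + j)%:Z = (i + j - m)%N%:Z by rewrite /e0; lia.
    rewrite -X_sys; last by rewrite -addnA; apply: idx_lt => //; lia.
    apply: H1; first by lia.
      by move: nb; rewrite /bad hjm.
    by apply: kk_nn; rewrite -addnA; apply: idx_lt => //; lia.
  have hjm : (m <= j)%N by lia.
  pose b := (j - (tau - B))%N.
  have hb : (b < B)%N by rewrite /b; lia.
  have := X_q S (i + j - m)%N%:Z hl hb.
  have -> : (i + j - m)%N%:Z - (tau + b)%:Z = e0 by rewrite /e0 /b; lia.
  have -> : (tau - B + b = j)%N by rewrite /b; lia.
  rewrite H0; last by rewrite /b; lia.
  rewrite addr0 => <-; apply: H1; first by lia.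
    by move: nb; rewrite /bad hjm.
  rewrite /nn; nia.
- have -> : (tau - (tau - B) = B)%N by lia.
  apply: leq_trans hs2.
  apply: (@count_inj bad (fun j => i + j - m)%N).
    by move=> j1 j2 _ _ /andP [h1 _] /andP [h2 _]; lia.
  move=> j hj /andP [hjm hej]; apply: hin => //; lia.
Qed.

Lemma UIstep : Budget N -> forall a beta, (a < cc)%N -> (beta < B)%N ->
  S i%:Z (a * tau + beta)%N = 0.
Proof.
move=> [s2 [hs2 hin]] a beta ha hbeta.
pose d : int := i%:Z - a%:Z.
pose msg := fun a' : nat => S (d + a'%:Z) (a' * tau + beta)%N.
pose bad := fun j => (a <= j)%N && e (i + j - a)%N.
have hcL : (cc <= tau.+1)%N by rewrite /cc; lia.
have hmsg := @MDS F cc tau.+1 msg bad hcL hF.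
have := hmsg _ _ a ha; rewrite /msg.
have -> : d + a%:Z = i%:Z by rewrite /d; lia.
apply.
- move=> j hj nb.
  have -> : \sum_(a' < cc) msg a' * G F cc a' j = cwr S beta d j by [].
  case: (ltnP j cc) => hjK.
    rewrite /cwr.
    have -> := (@cw_sys F cc msg j (leq_trans hcL hF) hjK).
    rewrite /msg; case: (ltnP j a) => hja.
      by apply: H0; rewrite /d; lia.
    have -> : d + j%:Z = (i + j - a)%N%:Z by rewrite /d; lia.
    rewrite -X_sys; last by apply: idx_lt => //; lia.
    apply: H1; first by rewrite /cc in ha hjK; lia.
      by move: nb; rewrite /bad hja.
    by apply: kk_nn; apply: idx_lt => //; lia.
  have hja : (a <= j)%N by lia.
  pose b := (j - cc)%N.
  have hb : (b < N)%N by rewrite /b /cc in hj hjK *; lia.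
  have := X_r S (i + j - a)%N%:Z hb hbeta.
  have -> : (i + j - a)%N%:Z - (cc + b)%:Z = d by rewrite /d /b; lia.
  have -> : (cc + b = j)%N by rewrite /b; lia.
  move=> <-; apply: H1; first by lia.
    by move: nb; rewrite /bad hja.
  rewrite /nn; nia.
- have -> : (tau.+1 - cc = N)%N by rewrite /cc; lia.
  apply: leq_trans hs2.
  apply: (@count_inj bad (fun j => i + j - a)%N).
    by move=> j1 j2 _ _ /andP [h1 _] /andP [h2 _]; lia.
  move=> j hj /andP [hja hej]; apply: hin => //; lia.
Qed.

Lemma UBstep : (forall t : nat, (i <= t <= i + tau)%N -> e t -> (t < i + B)%N) ->
  forall l j0, (l < cc)%N -> (j0 < B)%N -> S i%:Z (l * tau + j0)%N = 0.
Proof.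
move=> hbur l j0 hl hj0.
pose e0 : int := i%:Z - j0%:Z.
pose msg := fun m' : nat => S (e0 + (B + m')%:Z) (l * tau + B + m')%N.
pose bad := fun j => (j < j0)%N || (tau - B + j0 <= j)%N.
have hmsg := @MDS F (tau - B) tau msg bad (leq_subr _ _) (ltnW hF).
have hne : ~~ e (i + tau)%N.
  by apply/negP => /hbur; lia.
have := X_q S (i + tau)%N%:Z hl hj0.
have -> : (i + tau)%N%:Z - (tau + j0)%:Z = e0 by rewrite /e0; lia.
have -> : (i + tau)%N%:Z - tau%:Z = i%:Z by lia.
have hX : X S (i + tau)%N%:Z (kk + l * B + j0) = 0.
  by apply: H1 => //; [lia | rewrite /nn; nia].
rewrite hX.
have -> : cwv S l e0 (tau - B + j0) = 0.
  rewrite /cwv big1 // => m' _.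
  have -> : S (e0 + (B + m')%:Z) (l * tau + B + m')%N = msg m' by [].
  rewrite (hmsg _ _ m') ?mul0r //.
  - move=> j hj nb.
    have -> : \sum_(a < tau - B) msg a * G F (tau - B) a j = cwv S l e0 j by [].
    have hj1 : (j0 <= j)%N by move: nb; rewrite /bad; case: ltnP.
    have hj2 : (j < tau - B + j0)%N by move: nb; rewrite /bad; case: (leqP (tau - B + j0) j); rewrite orbC.
    case: (ltnP j (tau - B)) => hjK.
      rewrite /cwv.
      have -> := (@cw_sys F (tau - B) msg j (leq_trans (leq_subr _ _) (ltnW hF)) hjK).
      rewrite /msg.
      have -> : e0 + (B + j)%:Z = (i + B + j - j0)%N%:Z by rewrite /e0; lia.
      rewrite -X_sys; last by rewrite -addnA; apply: idx_lt => //; lia.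
      apply: H1; first by lia.
        by apply/negP => /hbur; lia.
      by apply: kk_nn; rewrite -addnA; apply: idx_lt => //; lia.
    pose b := (j - (tau - B))%N.
    have hb : (b < B)%N by rewrite /b; lia.
    have := X_q S (i + B + j - j0)%N%:Z hl hb.
    have -> : (i + B + j - j0)%N%:Z - (tau + b)%:Z = e0 by rewrite /e0 /b; lia.
    have -> : (tau - B + b = j)%N by rewrite /b; lia.
    rewrite H0; last by rewrite /b; lia.
    rewrite addr0 => <-; apply: H1; first by lia.
      by apply/negP => /hbur; lia.
    rewrite /nn; nia.
  - have -> : (tau - (tau - B) = B)%N by lia.
    have hsz : size (iota 0 j0 ++ iota (tau - B + j0) (B - j0)) = B.
      by rewrite size_cat !size_iota; lia.
    rewrite -[X in (_ <= X)%N]hsz.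
    apply: (@count_inj bad id); first by [].
    move=> j hj; rewrite mem_cat !mem_iota /bad => /orP [h|h]; apply/orP; [left|right]; lia.
by rewrite add0r => <-.
Qed.

Lemma sum_count (s : seq nat) : \sum_(j <- s) (e j : nat) = count e s.
Proof. by elim: s => [|x s IH]; rewrite ?big_nil ?big_cons ?IH. Qed.

Lemma decode_all (W : nat) : (tau < W)%N ->
  ((exists a l, (l <= B)%N /\ forall j, (i <= j < i + W)%N -> e j = (a <= j < a + l)%N)
   \/ (\sum_(i <= j < i + W) (e j : nat) <= N)%N) ->
  forall o, (o < kk)%N -> S i%:Z o = 0.
Proof.
move=> hW pat o ho.
case he: (e i).
  2: rewrite -X_sys //; apply: H1 => //; [lia | by rewrite he | exact: kk_nn].
have [hBud hU] : Budget B /\ forall l j0, (l < cc)%N -> (j0 < B)%N -> S i%:Z (l * tau + j0)%N = 0.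
  case: pat => [[a [l [hl hw]]] | hsum].
    have hb : forall t : nat, (i <= t <= i + tau)%N -> e t -> (t < i + B)%N.
      move=> t ht; rewrite hw; last by lia.
      have := hw i; rewrite he => /(_ _)/esym.
      by move=> /(_ ltac:(lia)) /andP [h1 h2] /andP [h3 h4]; lia.
    split; last exact: UBstep.
    exists (iota i B); rewrite size_iota; split => // t ht et.
    by rewrite mem_iota; have := hb t ht et; lia.
  have hBN : Budget N.
    exists [seq t <- iota i tau.+1 | e t]; split.
      rewrite size_filter; apply: leq_trans hsum.
      rewrite sum_count /index_iota addKn.
      have -> : iota i W = iota i tau.+1 ++ iota (i + tau.+1) (W - tau.+1).
        by rewrite -iotaD; congr iota; lia.
      by rewrite count_cat leq_addr.
    by move=> t ht et; rewrite mem_filter et mem_iota; lia.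
  split; last exact: UIstep.
  by case: hBN => s2 [hs2 hin]; exists s2; split => //; apply: leq_trans hNB.
have tau0 : (0 < tau)%N by lia.
rewrite (divn_eq o tau).
have hl : (o %/ tau < cc)%N by rewrite ltn_divLR //.
have hm : (o %% tau < tau)%N by rewrite ltn_mod.
case: (ltnP (o %% tau) B) => hmB; first exact: hU.
have := Vstep hBud hl (_ : (o %% tau - B < tau - B)%N).
have -> : (o %/ tau * tau + B + (o %% tau - B) = o %/ tau * tau + o %% tau)%N by lia.
by apply; lia.
Qed.

End Decode.
End Code.

Section Stream.
Variable F : finFieldType.
Variables tau B N T : nat.
Hypothesis hB : (0 < B)%N.
Hypothesis hN : (0 < N)%N.
Hypothesis hNB : (N <= B)%N.
Hypothesis hBt : (B <= tau)%N.
Hypothesis hF : (tau.+1 <= #|F|)%N.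
Hypothesis htT : (tau <= T)%N.

Local Notation k := (kk tau N).
Local Notation n := (nn tau B N).

Definition getv (v : 'rV[F]_k) (o : nat) : F :=
  if insub o is Some o' then v ord0 o' else 0%R.

Definition Sof i (h : 'I_i.+1 -> 'rV[F]_k) : int -> nat -> F := fun t o =>
  match t with Posz t' => if (t' <= i)%N then getv (h (inord t')) o else 0%R
  | Negz _ => 0%R end.

Definition Sseq (s : nat -> 'rV[F]_k) : int -> nat -> F := fun t o =>
  match t with Posz t' => getv (s t') o | Negz _ => 0%R end.

Definition enc : encoder F k n := fun i h => (\row_(o < nn tau B N) X tau B N (Sof h) i%:Z o)%R.

Definition consb i (s' : {ffun 'I_(i + T).+1 -> 'rV[F]_k})
   (y : 'I_(i + T).+1 -> option 'rV[F]_n) : bool :=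
  [forall m : 'I_(i + T).+1, (y m == None) ||
     (y m == Some (enc (fun m' : 'I_m.+1 => s' (inord m'))))].

Definition dec : decoder F k n T := fun i y =>
  match [pick s' | consb s' y] with Some s' => s' (inord i) | None => 0%R end.

Lemma enc_seq j (s : nat -> 'rV[F]_k) :
  enc (fun m : 'I_j.+1 => s m) = (\row_(o < nn tau B N) X tau B N (Sseq s) j%:Z o)%R.
Proof.
apply/rowP => o; rewrite !mxE; apply: X_caus => t' o' ht.
case: t' ht => [t'|t'] ht //=.
have htj : (t' <= j)%N by move: ht; rewrite lez_nat.
by rewrite htj inordK.
Qed.

Lemma dec_ok : forall (s : nat -> 'rV[F]_k) (e : erasure_pattern) W,
  (tau < W)%N -> admissible N B W e ->
  forall i, dec (fun m : 'I_(i + T).+1 => chan_out enc s e m) = s i.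
Proof.
move=> s e W hW adm i.
set y := fun m : 'I_(i + T).+1 => chan_out enc s e m.
have fe (j : nat) (h1 h2 : 'I_j.+1 -> 'rV[F]_k) :
    (forall m, h1 m = h2 m) -> enc h1 = enc h2.
  by move=> h; congr enc; apply: functional_extensionality.
have hcons : consb [ffun m : 'I_(i + T).+1 => s m] y.
  apply/forallP => m; rewrite /y /chan_out; case: (e m) => //=.
  apply/eqP; congr Some; apply: fe => m'.
  rewrite ffunE inordK //; have := ltn_ord m'; have := ltn_ord m; lia.
rewrite /dec; case: pickP => [s' hs' | hnone]; last first.
  by have := hnone [ffun m : 'I_(i + T).+1 => s m]; rewrite hcons.
pose s2 := fun t : nat => if (t < (i + T).+1)%N then s' (inord t) else 0%R.
have hrow (m : 'I_(i + T).+1) : e m = false ->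
    forall o, (o < n)%N -> X tau B N (Sseq s) m o = X tau B N (Sseq s2) m o.
  move=> hem o ho.
  have := forallP hs' m; rewrite /y /chan_out hem /= => /eqP [].
  rewrite (@fe m (fun m' => s' (inord m')) (fun m' => s2 m')); last first.
    move=> m'; rewrite /s2 ifT //; have := ltn_ord m'; have := ltn_ord m; lia.
  rewrite !enc_seq => /rowP /(_ (Ordinal ho)); rewrite !mxE //.
pose D := fun t o => (Sseq s t o - Sseq s2 t o)%R.
have Dhi : forall t o, (k <= o)%N -> D t o = 0%R.
  move=> t o ho; rewrite /D /Sseq; case: t => [t|t] //=; last by rewrite subrr.
  by rewrite /getv !insubN ?subrr // -leqNgt.
have claim : forall m j, (j < m)%N -> (j <= i)%N -> forall o, D (Posz j) o = 0%R.
  elim=> [//|m IH] j hjm hji o.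
  case: (ltnP j m) => hj; first exact: IH.
  have hjeq : j = m by lia.
  case: (ltnP o k) => ho; last exact: Dhi.
  apply: (@decode_all F tau B N hB hN hNB hBt hF D j e _ _ W hW (adm j) o ho).
    move=> t o'; case: t => [t|t] ht; last by rewrite /D /= subrr.
    case: (ltnP o' k) => ho'; last exact: Dhi.
    apply: IH; lia.
  move=> t ht het o' ho'.
  rewrite X_lin.
  have htT' : (t < (i + T).+1)%N by lia.
  have := hrow (Ordinal htT'); rewrite /= (negbTE het) => /(_ erefl o' ho') ->.
  by rewrite subrr.
have hi : s i = s2 i.
  apply/rowP => o.
  have := claim i.+1 i (ltnSn _) (leqnn _) o.
  by rewrite /D /= /getv valK => /eqP; rewrite subr_eq0 => /eqP.
by rewrite hi /s2 ifT //; lia.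
Qed.

End Stream.

Section RatI.
Local Open Scope ring_scope.
Lemma rat_ineq (c t b n : nat) : (0 < b)%N -> (0 < n)%N -> (c + n = t.+1)%N ->
  let R : rat := (((c * t)%N)%:R / ((c * t + c * b + n * b)%N)%:R)%R in
  ((R / (1 - R)) * b%:R + n%:R > t%:R)%R.
Proof.
move=> hb hn hc /=.
have hc' : (c%:R : rat) = t%:R + 1 - n%:R.
  by apply/eqP; rewrite eq_sym subr_eq -natrD hc -addn1 natrD.
rewrite !natrD !natrM hc'.
have t1 : (t%:R + 1 : rat) != 0 by apply: lt0r_neq0; have := ler0n rat t; lra.
have b0 : (b%:R : rat) != 0 by rewrite pnatr_eq0 -lt0n.
have -> : ((t%:R + 1 - n%:R) * t%:R / ((t%:R + 1 - n%:R) * t%:R + (t%:R + 1 - n%:R) * b%:R + n%:R * b%:R) /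
   (1 - (t%:R + 1 - n%:R) * t%:R / ((t%:R + 1 - n%:R) * t%:R + (t%:R + 1 - n%:R) * b%:R + n%:R * b%:R)) * b%:R + n%:R
   = t%:R + n%:R / (t%:R + 1) :> rat)%R.
  field.
  rewrite -hc' t1 /=.
  have hc0 := ler0n rat c; have ht0 := ler0n rat t; have hn0 := ler0n rat n.
  have hb0 : (0 : rat) < b%:R by rewrite ltr0n.
  apply/andP; split; apply: lt0r_neq0; nra.
rewrite ltrDl divr_gt0 ?ltr0n //.
have := ler0n rat t; lra.
Qed.
End RatI.

Unset Implicit Arguments.
Set Strict Implicit.

Theorem theorem2 (N B W T : nat) :
  0 < N -> 0 < B -> 0 < W -> 0 < T ->
  N <= B -> B + 1 <= W -> B <= T ->
  exists (F : finFieldType) (k n : nat) (f : encoder F k n) (g : decoder F k n T),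
    0 < n /\ has_delay_over N B W f g /\
    let R : rat := (k%:R / n%:R)%R in
    ((R / (1 - R)) * B%:R + N%:R > (T_eff T W)%:R)%R.
Proof.
move=> hN hB hW hT hNB hBW hBT.
set tau := T_eff T W.
have hBt : B <= tau by rewrite /tau /T_eff; lia.
have htT : tau <= T by rewrite /tau /T_eff; lia.
have htW : tau < W by rewrite /tau /T_eff; lia.
have [p hp pp] := prime_above tau.+1.
have hF : tau.+1 <= #|'F_p| by rewrite card_Fp //; lia.
exists 'F_p, (kk tau N), (nn tau B N), (@enc 'F_p tau B N), (@dec 'F_p tau B N T).
split; first by rewrite /nn /kk /cc; nia.
split.
  move=> s e adm i.
  exact: (@dec_ok 'F_p tau B N T hB hN hNB hBt hF htT s e W htW adm i).
have := @rat_ineq (cc tau N) tau B N hB hN ltac:(rewrite /cc; lia).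
by rewrite /kk /nn.
Qed.
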